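(* Consider the $\mathrm{Top}\text{-}\ell$ version of fault-tolerant ordered $k$-median, fix an optimal solution with optimal value $\mathsf{OPT}$, and let $T_\ell=\vec{\xi}^\downarrow_\ell$ be the $\ell$-th largest individual connection distance in that optimal solution. Then the following linear program (Top-LP), in variables $x_{ij}$ ($i\in\mathcal{F},j\in\mathcal{C}$), $y_i$ ($i\in\mathcal{F}$), $R_\ell$, is feasible and its optimal value satisfies $R_\ell\le\mathsf{OPT}$: minimize $R_\ell\geq0$ subject to $\sum_{j\in\mathcal{C}}\sum_{i\in\mathcal{F}}x_{ij}\mathcal{L}_{1.001\cdot T_\ell}(i,j)\le R_\ell$; $\sum_{j\in S}\sum_{i\in\mathcal{F}}x_{ij}d(i,j)\le R_\ell$ for all $S\subseteq\mathcal{C}$ with $|S|=\ell$; $\sum_{i\in\mathcal{F}}x_{ij}=r_j$ for all $j\in\mathcal{C}$; $\sum_{i\in\mathcal{F}}y_i=k$; $0\le x_{ij}\le y_i\le1$ for all $i\in\mathcal{F},j\in\mathcal{C}$.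
   Context: Fault-tolerant ordered $k$-median: given finite facility set $\mathcal{F}$, finite client set $\mathcal{C}$ with $n=|\mathcal{C}|$, a metric $d$ on $\mathcal{F}\cup\mathcal{C}$, $k\in\mathbb{Z}_+$, requirements $r_j\in\mathbb{Z}_+$ for $j\in\mathcal{C}$, and a non-increasing non-negative $w\in\mathbb{R}^n$. A solution opens a set $F\subseteq\mathcal{F}$ of at most $k$ facilities; each client $j$ is connected to its $r_j$ nearest (distinct) open facilities, with service cost $d_{r_j}(j,F)=\min_{S'\subseteq F,|S'|=r_j}\sum_{i\in S'}d(i,j)$; the objective is $w^\top\vec{c}^\downarrow$ with $\vec{c}=(d_{r_j}(j,F):j\in\mathcal{C})$ sorted non-increasingly. In the $\mathrm{Top}\text{-}\ell$ version ($\ell\in[n]$), $w$ consists of $\ell$ ones followed by zeros, so the objective is the sum of the $\ell$ largest service costs. The individual connection cost vector $\vec{\xi}$ of a solution is the vector of distances $d(i,j)$ over all pairs where client $j$ is connected to facility $i$; $\vec{\xi}^\downarrow$ is it sorted non-increasingly. For $T\geq0$, $\mathcal{L}_T(i,j)=d(i,j)$ if $d(i,j)\geq T$ and $0$ otherwise. *)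

(* Defs.v *)
From HB Require Import structures.
From mathcomp Require Import all_boot all_order all_algebra.
Set Implicit Arguments. Unset Strict Implicit. Unset Printing Implicit Defensive.
Import Order.TTheory GRing.Theory Num.Theory.
Local Open Scope ring_scope.

Definition is_metric (R : realFieldType) (X : Type) (d : X -> X -> R) : Prop :=
  [/\ forall x y, 0 <= d x y,
      forall x y, d x y = 0 <-> x = y,
      forall x y, d x y = d y x
    & forall x y z, d x z <= d x y + d y z].

Section Defs.
Variables (R : realFieldType) (I J : finType) (d : I + J -> I + J -> R).

Definition dfc (i : I) (j : J) : R := d (inl i) (inr j).

(* The iterated min is seeded with sum_{i in F} d(i,j), which (distances being
   nonnegative) is >= every candidate, so when some S' exists (r <= |F|) this is
   exactly the minimum over the candidates. *)
Definition serv_cost (F : {set I}) (r : nat) (j : J) : R :=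
  \big[Num.min/(\sum_(i in F) dfc i j)]_(S : {set I} | (S \subset F) && (#|S| == r))
     \sum_(i in S) dfc i j.

Definition feasible_sol (k : nat) (r : J -> nat) (F : {set I}) : Prop :=
  (#|F| <= k)%N /\ forall j, (r j <= #|F|)%N.

Definition sort_desc (s : seq R) : seq R := sort (fun a b => b <= a) s.

Definition ordered_cost (w : nat -> R) (r : J -> nat) (F : {set I}) : R :=
  \sum_(t < #|J|) w t * nth 0 (sort_desc [seq serv_cost F (r j) j | j <- enum J]) t.

Definition top_w (l : nat) : nat -> R := fun t => if (t < l)%N then 1 else 0.

Definition is_optimal (k : nat) (r : J -> nat) (w : nat -> R) (F : {set I}) : Prop :=
  feasible_sol k r F /\
  forall F', feasible_sol k r F' -> ordered_cost w r F <= ordered_cost w r F'.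

Definition valid_connection (r : J -> nat) (F : {set I}) (sigma : J -> {set I}) : Prop :=
  forall j, [/\ sigma j \subset F, #|sigma j| = r j
              & \sum_(i in sigma j) dfc i j = serv_cost F (r j) j].

Definition conn_vec_desc (sigma : J -> {set I}) : seq R :=
  sort_desc [seq dfc p.1 p.2 | p <- enum [pred p : I * J | p.1 \in sigma p.2]].

Definition xi_desc (sigma : J -> {set I}) (l : nat) : R :=
  nth 0 (conn_vec_desc sigma) l.-1.

Definition LT (T : R) (i : I) (j : J) : R := if T <= dfc i j then dfc i j else 0.

Definition topLP_feasible (k l : nat) (r : J -> nat) (T : R)
    (x : I -> J -> R) (y : I -> R) (Rl : R) : Prop :=
  0 <= Rl /\
  [/\ \sum_(j : J) \sum_(i : I) x i j * LT T i j <= Rl,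
      forall S : {set J}, #|S| = l -> \sum_(j in S) \sum_(i : I) x i j * dfc i j <= Rl,
      forall j, \sum_(i : I) x i j = (r j)%:R,
      \sum_(i : I) y i = k%:R
    & forall i j, [/\ 0 <= x i j, x i j <= y i & y i <= 1]].

End Defs.

(* Main.v *)
Require Import Defs.
From HB Require Import structures.
From mathcomp Require Import all_boot all_order all_algebra.
From mathcomp Require Import lra zify.
Import Order.TTheory GRing.Theory Num.Theory.
Local Open Scope ring_scope.

Section Aux.
Variable R : realFieldType.

Lemma sortd_sorted (s : seq R) : sorted (fun a b => b <= a) (sort_desc s).
Proof. by apply: sort_sorted => a b; exact: le_total. Qed.

Lemma sortd_ge (s : seq R) i j : (i <= j < size (sort_desc s))%N ->
  nth 0 (sort_desc s) j <= nth 0 (sort_desc s) i.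
Proof.
move=> /andP[ij js].
have := @sorted_leq_nth _ (fun a b : R => b <= a) _ _ 0 _ (sortd_sorted s) i j.
apply => //.
- by move=> a b c /= h1 h2; exact: le_trans h2 h1.
- by rewrite inE (leq_ltn_trans ij js).
Qed.

Lemma topA (J : finType) (f : J -> R) l (Q : {set J}) :
  (forall j, 0 <= f j) -> (0 < l <= #|J|)%N -> (#|Q| <= l)%N ->
  \sum_(j in Q) f j <= \sum_(t < #|J|) top_w R l t * nth 0 (sort_desc [seq f j | j <- enum J]) t.
Proof.
move=> f0 /andP[l0 lJ] Ql.
set s := sort_desc _.
have sz : size s = #|J| by rewrite size_sort size_map -cardE.
have memS : forall v, v \in s -> 0 <= v.
  by move=> v; rewrite mem_sort => /mapP [j _ ->].
set th := nth 0 s l.-1.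
have th0 : 0 <= th by apply: memS; apply: mem_nth; rewrite sz; lia.
have hi : forall t, (t < l)%N -> th <= nth 0 s t.
  move=> t tl; apply: sortd_ge; rewrite -/s sz; apply/andP; split.
    lia.
  lia.
have lo : forall t, (l <= t < #|J|)%N -> nth 0 s t <= th.
  move=> t /andP[lt tJ]; apply: sortd_ge; rewrite -/s sz tJ andbT.
  lia.
pose g v := Num.max (v - th) 0.
have g0 : forall v, 0 <= g v by move=> v; rewrite le_max lexx orbT.
have RHS : \sum_(t < #|J|) top_w R l t * nth 0 s t = \sum_j g (f j) + th *+ l.
  rewrite -(big_mkord xpredT (fun t => top_w R l t * nth 0 s t)).
  rewrite (@big_cat_nat _ _ _ l 0 #|J|) /=; [|by []|exact: lJ].
  rewrite (eq_big_nat _ _ (F2 := fun t => g (nth 0 s t) + th)); last first.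
    move=> t /andP[_ tl]; rewrite /top_w tl mul1r /g max_l; first by rewrite subrK.
    by rewrite subr_ge0 hi.
  rewrite [X in _ + X](eq_big_nat _ _ (F2 := fun t => g (nth 0 s t))); last first.
    move=> t /andP[lt tJ]; rewrite /top_w ltnNge lt mul0r /g max_r //.
    by rewrite subr_le0 lo // lt tJ.
  rewrite big_split /= sumr_const_nat subn0 addrAC -big_cat_nat //= -sz.
  rewrite -(big_nth 0 xpredT g) /s.
  rewrite (perm_big _ (permEl (perm_sort _ _))) big_map big_enum /=.
  by [].
rewrite RHS.
apply: (@le_trans _ _ (\sum_(j in Q) (g (f j) + th))).
  apply: ler_sum => j _; rewrite /g.
  by rewrite -lerBlDr le_max lexx.
rewrite big_split /= sumr_const.
apply: lerD.
  rewrite [X in _ <= X](bigID (mem Q)) /= lerDl.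
  by apply: sumr_ge0 => i _; exact: g0.
by rewrite -(subnKC Ql) mulrnDr lerDl mulrn_wge0.
Qed.


Lemma cntB (s0 : seq R) l : (0 < l)%N ->
  (count (fun v : R => (nth 0 (sort_desc s0) l.-1 < v)%R) (sort_desc s0) <= l.-1)%N.
Proof.
move=> l0; set s := sort_desc s0; set th := nth 0 s l.-1.
case: (leqP (size s) l.-1) => h.
  exact: leq_trans (count_size _ _) h.
rewrite -sum1_count (big_nth 0) (@big_cat_nat _ _ _ l.-1 0 (size s)) //=; last exact: ltnW.
rewrite [X in (_ + X)%N]big_nat_cond [X in (_ + X)%N]big1 ?addn0; last first.
  move=> i /andP[/andP[li isz] hlt]; exfalso; move: hlt.
  by rewrite ltNge sortd_ge // li isz.
rewrite /index_iota subn0 sum1_count.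
by rewrite (leq_trans (count_size _ _)) // size_iota.
Qed.

End Aux.

Lemma sum_ind (R : realFieldType) (I : finType) (P : pred I) (h : I -> R) :
  \sum_i (if P i then 1 else 0) * h i = \sum_(i | P i) h i.
Proof.
rewrite [RHS]big_mkcond; apply: eq_bigr => i _.
by case: (P i); rewrite ?mul1r ?mul0r.
Qed.

Lemma LT0 (R : realFieldType) (xi v : R) : 0 <= xi -> 0 <= v -> v <= xi ->
  (if (1001%:R / 1000%:R) * xi <= v then v else 0) = 0.
Proof.
move=> h1 h2 h3; case: ifP => // h4.
apply/eqP; rewrite eq_le h2 andbT.
lra.
Qed.

Theorem lemma4 (R : realFieldType) (I J : finType) (d : I + J -> I + J -> R)
    (k : nat) (r : J -> nat) (l : nat) (Fopt : {set I}) (sigma : J -> {set I}) :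
  is_metric d ->
  (0 < k)%N -> (k <= #|I|)%N ->
  (forall j, (0 < r j)%N) ->
  (1 <= l <= #|J|)%N ->
  is_optimal d k r (top_w R l) Fopt ->
  valid_connection d r Fopt sigma ->
  exists (x : I -> J -> R) (y : I -> R) (Rl : R),
    topLP_feasible d k l r ((1001%:R / 1000%:R) * xi_desc d sigma l) x y Rl /\
    Rl <= ordered_cost d (top_w R l) r Fopt.
Proof.
move=> [dnn _ _ _] kpos kI rpos /andP[l1 lJ] [[Fk Fr] _] vc.
pose f j := serv_cost d Fopt (r j) j.
have fE : forall j, f j = \sum_(i in sigma j) dfc d i j by move=> j; case: (vc j).
have f0 : forall j, 0 <= f j.
  by move=> j; rewrite fE; apply: sumr_ge0 => i _; exact: dnn.
have A : forall Q : {set J}, (#|Q| <= l)%N -> \sum_(j in Q) f j <= ordered_cost d (top_w R l) r Fopt.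
  by move=> Q hQ; apply: topA => //; rewrite l1.
set OPT := ordered_cost _ _ _ _.
set xi := xi_desc d sigma l.
have xi0 : 0 <= xi.
  rewrite /xi /xi_desc; set s := conn_vec_desc _ _.
  case: (ltnP l.-1 (size s)) => h; last by rewrite nth_default.
  have := mem_nth 0 h; rewrite /s /conn_vec_desc mem_sort => /mapP [p _ ->].
  exact: dnn.
pose a := #|Fopt|; pose n := #|I|.
pose c : R := (k%:R - a%:R) / (n%:R - a%:R).
have ak : (a <= k)%N by [].
have c0 : 0 <= c.
  by rewrite /c divr_ge0 // subr_ge0 ler_nat // (leq_trans ak).
have c1 : c <= 1.
  case: (ltngtP a n) => h.
  - rewrite /c ler_pdivrMr ?mul1r ?lerD2r ?ler_nat // subr_gt0 ltr_nat //.
  - by move: (max_card Fopt); rewrite -/a -/n leqNgt h.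
  - by rewrite /c h subrr invr0 mulr0.
exists (fun i j => if i \in sigma j then 1 else 0), (fun i => if i \in Fopt then 1 else c), OPT.
split; last done.
split.
  by have := A set0; rewrite cards0 big_set0 => ->.
split.
- pose Q := [set j | [exists i, (i \in sigma j) && (xi < dfc d i j)]].
  have hQ : (#|Q| <= l)%N.
    pose P := [set p : I * J | (p.1 \in sigma p.2) && (xi < dfc d p.1 p.2)].
    have QP : Q \subset [set p.2 | p in P].
      apply/subsetP => j; rewrite inE => /existsP [i /andP[h1 h2]].
      by apply/imsetP; exists (i, j) => //; rewrite inE /= h1 h2.
    apply: leq_trans (subset_leq_card QP) _.
    apply: leq_trans (leq_imset_card _ _) _.
    have -> : #|P| = count (fun v => xi < v) (conn_vec_desc d sigma).
      rewrite /conn_vec_desc count_sort count_map -size_filter.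
      rewrite -(card_uniqP _); last by rewrite filter_uniq // enum_uniq.
      apply: eq_card => p; rewrite inE mem_filter mem_enum inE /=.
      by rewrite andbC.
    rewrite /xi /xi_desc /conn_vec_desc.
    exact: leq_trans (@cntB _ _ _ l1) (leq_pred _).
  apply: le_trans (A Q hQ).
  rewrite [X in _ <= X]big_mkcond /=; apply: ler_sum => j _.
  rewrite sum_ind; case: ifPn => jQ.
    rewrite fE; apply: ler_sum => i _; rewrite /LT; case: ifP => // _.
    exact: dnn.
  rewrite big1 // => i iS; rewrite /LT LT0 //; first exact: dnn.
  move: jQ; rewrite inE negb_exists => /forallP /(_ i).
  by rewrite iS /= -leNgt.
- move=> S hS; apply: le_trans (A S _); last by rewrite hS.
  apply: ler_sum => j _; rewrite sum_ind fE //.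
- move=> j; rewrite -big_mkcond /= sumr_const.
  by case: (vc j) => _ -> _.
- rewrite (bigID (mem Fopt)) /=.
  rewrite (eq_bigr (fun=> 1)); last by move=> i ->.
  rewrite (eq_bigr (fun=> c)); last by move=> i /negbTE ->.
  rewrite !sumr_const.
  have hC : #|[predC Fopt]| = (n - a)%N by rewrite /n -(cardC Fopt) addKn.
  rewrite -[X in _ + X]mulr_natr.
  have -> : #|[pred i | ~~ (i \in Fopt)]| = (n - a)%N by rewrite -hC.
  rewrite -/a.
  have hak : (a <= n)%N by exact: max_card.
  case: (ltngtP a n) => h.
  + rewrite natrB ?(ltnW h) // /c mulfVK; first by rewrite subrKC.
    by rewrite subr_eq0 eqr_nat neq_ltn h orbT.
  + by move: hak; rewrite leqNgt h.
  + have kn : (k <= n)%N := kI.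
    have ka : k = a by move: ak kn h; clear; lia.
    by rewrite -h subnn mulr0 addr0 ka.
- move=> i j; split.
  + by case: ifP => _; rewrite ?ler01 ?lexx.
  + case: ifP => h; case: ifP => h'.
    * exact: lexx.
    * by case: (vc j) => /subsetP /(_ i h); rewrite h'.
    * exact: ler01.
    * exact: c0.
  + by case: ifP => _; rewrite ?lexx.
Qed.
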